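(* Every $2\times2$ minor of $X$ lies in the ideal $\mathcal{I}'+\big(\wedge^2(B_1|B_2),\ \mathrm{Tr}(A)+2\pi,\ \text{entries of } B_2J_{n-r}B_1^{t}-AJ_{l}\big)$ of $S$.
   Context: Let $p$ be an odd prime, $F/\mathbb{Q}_p$ a finite extension with uniformizer $\pi$, $\mathcal{O}$ the ring of integers of the completion $\breve F$ of the maximal unramified extension of $F$ ($\pi$ is a uniformizer of $\mathcal{O}$, $2\in\mathcal{O}^\times$). Let $n\ge3$ and $1\le r\le n-1$ be integers, $d=2n$, $l=2r$. Let $X=(x_{i,j})_{1\le i,j\le d}$ be a matrix of indeterminates and $S=\mathcal{O}[(x_{i,j})]$. Write $X$ in block form $X=\begin{pmatrix}E_1&O_1&E_2\\ B_1&A&B_2\\ E_3&O_2&E_4\end{pmatrix}$ with $E_c$ of size $(n-r)\times(n-r)$, $O_1,O_2$ of size $(n-r)\times l$, $B_1,B_2$ of size $l\times(n-r)$, $A$ of size $l\times l$. Let $Z=\{n-r+1,\dots,n+r\}$ and $Z^c=\{1,\dots,d\}\setminus Z$. Let $J_m$ be the $m\times m$ antidiagonal matrix with $1$'s on the antidiagonal. Let $\wedge^2(B_1|B_2)$ denote the set of elements $x_{i,j}x_{t,s}-x_{i,s}x_{t,j}$ with $i,t\in Z$, $j,s\in Z^c$. Let $\mathcal{I}'\subset S$ be the ideal generated by the entries of the six matrices $E_1+\tfrac12J_{n-r}B_2^tJ_lB_1$, $E_2+\tfrac12J_{n-r}B_2^tJ_lB_2$, $E_3+\tfrac12J_{n-r}B_1^tJ_lB_1$,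 $E_4+\tfrac12J_{n-r}B_1^tJ_lB_2$, $O_1+\tfrac12J_{n-r}B_2^tJ_lA$, $O_2+\tfrac12J_{n-r}B_1^tJ_lA$. *)

(* Defs.v *)
From HB Require Import structures.
From mathcomp Require Import all_boot all_algebra.
From mathcomp Require Export mpoly.
Set Implicit Arguments. Unset Strict Implicit. Unset Printing Implicit Defensive.
Import GRing.Theory.
Local Open Scope ring_scope.

Definition in_ideal (T : comRingType) (P : T -> Prop) (f : T) : Prop :=
  exists s : seq (T * T),
    (forall q, q \in s -> P q.2) /\ f = \sum_(q <- s) q.1 * q.2.

(* The polynomial ring S = R[x_{i,j} : 0 <= i,j < d] with d*d variables;
   the indeterminate x_{i,j} (0-based indices) is 'X_(i*d+j). *)
Definition polyS (R : comUnitRingType) (d : nat) := {mpoly R[d * d]}.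

Definition xv (R : comUnitRingType) (d : nat) (i j : nat) : polyS R d :=
  match @insub _ (fun k => k < d * d)%N _ (i * d + j)%N with
  | Some k => 'X_k
  | None => 0
  end.

Definition Jmx (T : comRingType) (m : nat) : 'M[T]_m :=
  \matrix_(i < m, j < m) ((i + j)%N == m.-1)%:R.

Section Blocks.
Variables (R : comUnitRingType) (n r : nat).
(* d = 2n, m = n - r (size of E_c), l = 2r (size of A).  0-based block ranges:
   rows/cols [0,m), [m, m+l), [m+l, d). *)
Definition dd := (2 * n)%N.
Definition mm := (n - r)%N.
Definition ll := (2 * r)%N.
Local Notation S := (polyS R dd).
Local Notation x := (@xv R dd).

Definition E1 : 'M[S]_(mm, mm) := \matrix_(a, b) x a b.
Definition O1 : 'M[S]_(mm, ll) := \matrix_(a, c) x a (mm + c).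
Definition E2 : 'M[S]_(mm, mm) := \matrix_(a, b) x a (mm + ll + b).
Definition B1 : 'M[S]_(ll, mm) := \matrix_(c, b) x (mm + c) b.
Definition Amx : 'M[S]_(ll, ll) := \matrix_(c, e) x (mm + c) (mm + e).
Definition B2 : 'M[S]_(ll, mm) := \matrix_(c, b) x (mm + c) (mm + ll + b).
Definition E3 : 'M[S]_(mm, mm) := \matrix_(a, b) x (mm + ll + a) b.
Definition O2 : 'M[S]_(mm, ll) := \matrix_(a, c) x (mm + ll + a) (mm + c).
Definition E4 : 'M[S]_(mm, mm) := \matrix_(a, b) x (mm + ll + a) (mm + ll + b).

Definition half : S := (2%:R : R)^-1 %:MP.
Local Notation J := (@Jmx S).

Definition G1 := E1 + half *: (J mm *m B2^T *m J ll *m B1).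
Definition G2 := E2 + half *: (J mm *m B2^T *m J ll *m B2).
Definition G3 := E3 + half *: (J mm *m B1^T *m J ll *m B1).
Definition G4 := E4 + half *: (J mm *m B1^T *m J ll *m B2).
Definition G5 := O1 + half *: (J mm *m B2^T *m J ll *m Amx).
Definition G6 := O2 + half *: (J mm *m B1^T *m J ll *m Amx).

Definition gen_I' (f : S) : Prop :=
  (exists a b, f = G1 a b) \/ (exists a b, f = G2 a b) \/
  (exists a b, f = G3 a b) \/ (exists a b, f = G4 a b) \/
  (exists a c, f = G5 a c) \/ (exists a c, f = G6 a c).

(* Z = {m, ..., m+l-1} (0-based version of {n-r+1, ..., n+r}). *)
Definition inZ (i : nat) : bool := (mm <= i < mm + ll)%N.
Definition inZc (j : nat) : bool := (j < dd)%N && ~~ inZ j.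

Definition gen_big (pi : R) (f : S) : Prop :=
  gen_I' f \/
  (exists i t j s, [/\ inZ i, inZ t, inZc j & inZc s] /\
      f = x i j * x t s - x i s * x t j) \/
  f = \tr Amx + 2%:R * pi%:MP \/
  (exists c e, f = (B2 *m J mm *m B1^T - Amx *m J ll) c e).
End Blocks.

(* Main.v *)
Require Import Defs.
From mathcomp Require Import all_boot all_algebra.
From mathcomp Require Import mpoly.
From mathcomp Require Import ring zify.
Import GRing.Theory.
Local Open Scope ring_scope.

Section Ideal.
Variables (T : comRingType) (P : T -> Prop).
Local Notation I := (in_ideal P).

Lemma I0 : I 0.
Proof. exists [::]; split => //; by rewrite big_nil. Qed.

Lemma Igen g : P g -> I g.
Proof. move=> Pg; exists [:: (1, g)]; split.
  by move=> q; rewrite inE => /eqP ->.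
by rewrite big_cons big_nil /= mul1r addr0. Qed.

Lemma ID f g : I f -> I g -> I (f + g).
Proof. move=> [s [Hs ->]] [s' [Hs' ->]]; exists (s ++ s'); split.
  by move=> q; rewrite mem_cat => /orP [/Hs|/Hs'].
by rewrite big_cat. Qed.

Lemma IM a f : I f -> I (a * f).
Proof. move=> [s [Hs ->]]; exists [seq (a * q.1, q.2) | q <- s]; split.
  by move=> q /mapP [q' /Hs H ->].
by rewrite big_map mulr_sumr; apply eq_bigr => q _; rewrite mulrA. Qed.

Lemma IN f : I f -> I (- f).
Proof. by move=> H; rewrite -mulN1r; apply IM. Qed.

Lemma IB f g : I f -> I g -> I (f - g).
Proof. by move=> ? ?; apply ID => //; apply IN. Qed.

Lemma Isum (K : finType) (F : K -> T) : (forall k, I (F k)) -> I (\sum_k F k).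
Proof. move=> H; apply: (big_ind I) => //; [exact I0| exact ID]. Qed.

Definition eqv f g := I (f - g).

Lemma eqv_refl f : eqv f f.
Proof. by rewrite /eqv subrr; apply I0. Qed.

Lemma eqvM f f' g g' : eqv f f' -> eqv g g' -> eqv (f * g) (f' * g').
Proof. rewrite /eqv => H1 H2.
have -> : f * g - f' * g' = g * (f - f') + f' * (g - g') by ring.
by apply ID; apply IM. Qed.

Lemma eqvB f f' g g' : eqv f f' -> eqv g g' -> eqv (f - g) (f' - g').
Proof. rewrite /eqv => H1 H2.
have -> : f - g - (f' - g') = (f - f') - (g - g') by ring.
by apply IB. Qed.

Lemma eqv_I f g : eqv f g -> I g -> I f.
Proof. rewrite /eqv => H1 H2; have -> : f = (f - g) + g by ring. by apply ID. Qed.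
End Ideal.
Arguments eqv {T} P f g.

Lemma expand (T : comRingType) (K : finType) (a b u v : K -> T) :
  (\sum_k a k * u k) * (\sum_k b k * v k) - (\sum_k a k * v k) * (\sum_k b k * u k)
  = \sum_k \sum_k' a k * b k' * (u k * v k' - v k * u k').
Proof.
rewrite !big_distrlr /= -sumrB; apply eq_bigr => k _; rewrite -sumrB.
apply eq_bigr => k' _; ring.
Qed.

Lemma sum_delta (T : comRingType) (K : finType) (c0 : K) (F : K -> T) :
  \sum_k (k == c0)%:R * F k = F c0.
Proof.
rewrite (bigD1 c0) //= eqxx mul1r big1 ?addr0 // => k /negbTE ->.
by rewrite mul0r.
Qed.

Lemma Jmx_invol (T : comRingType) (k : nat) : Jmx T k *m Jmx T k = 1%:M.
Proof.
apply/matrixP => i j; rewrite !mxE (bigD1 (rev_ord i)) //= !mxE.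
have -> : (i + rev_ord i == k.-1)%N by apply/eqP; rewrite /=; case: i => i Hi /=; lia.
rewrite mul1r big1 ?addr0.
  have -> : (rev_ord i + j == k.-1)%N = (i == j).
    case: i j => [i Hi] [j Hj] /=; apply/eqP/eqP; [move=> H; apply/val_inj => /=; lia|].
    move=> [->]; lia.
  by [].
move=> e He; rewrite !mxE.
have -> : (i + e == k.-1)%N = false.
  apply/negbTE; apply: contra He => /eqP H; apply/eqP/val_inj => /=.
  case: i e H => [i Hi] [e He'] /= H; lia.
by rewrite mul0r.
Qed.

Section Main.
Variables (R : comUnitRingType) (pi : R) (n r : nat).
Hypothesis hrn : (r <= n)%N.
Local Notation S := (polyS R (dd n)).
Local Notation x := (xv R (dd n)).
Local Notation P := (@gen_big R n r pi).
Local Notation I := (in_ideal P).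
Local Notation m := (mm n r).
Local Notation l := (ll r).
Local Notation d := (dd n).
Local Notation h := (Defs.half R n).

Definition M1 := Jmx S m *m (B1 R n r)^T *m Jmx S l.
Definition M2 := Jmx S m *m (B2 R n r)^T *m Jmx S l.

Lemma G1E a b : G1 R n r a b = x a b + h * \sum_k M2 a k * x (m + k) b.
Proof.
rewrite /G1 [LHS]mxE; congr (_ + _); first by rewrite mxE.
rewrite mxE; congr (_ * _); rewrite mxE; apply eq_bigr => k _.
by rewrite [B1 _ _ _ k b]mxE.
Qed.

Lemma G2E a b : G2 R n r a b = x a (m + l + b) + h * \sum_k M2 a k * x (m + k) (m + l + b).
Proof.
rewrite /G2 [LHS]mxE; congr (_ + _); first by rewrite mxE.
rewrite mxE; congr (_ * _); rewrite mxE; apply eq_bigr => k _.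
by rewrite [B2 _ _ _ k b]mxE.
Qed.

Lemma G3E a b : G3 R n r a b = x (m + l + a) b + h * \sum_k M1 a k * x (m + k) b.
Proof.
rewrite /G3 [LHS]mxE; congr (_ + _); first by rewrite mxE.
rewrite mxE; congr (_ * _); rewrite mxE; apply eq_bigr => k _.
by rewrite [B1 _ _ _ k b]mxE.
Qed.

Lemma G4E a b : G4 R n r a b = x (m + l + a) (m + l + b) + h * \sum_k M1 a k * x (m + k) (m + l + b).
Proof.
rewrite /G4 [LHS]mxE; congr (_ + _); first by rewrite mxE.
rewrite mxE; congr (_ * _); rewrite mxE; apply eq_bigr => k _.
by rewrite [B2 _ _ _ k b]mxE.
Qed.

Lemma G5E a b : G5 R n r a b = x a (m + b) + h * \sum_k M2 a k * x (m + k) (m + b).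
Proof.
rewrite /G5 [LHS]mxE; congr (_ + _); first by rewrite mxE.
rewrite mxE; congr (_ * _); rewrite mxE; apply eq_bigr => k _.
by rewrite [Amx _ _ _ k b]mxE.
Qed.

Lemma G6E a b : G6 R n r a b = x (m + l + a) (m + b) + h * \sum_k M1 a k * x (m + k) (m + b).
Proof.
rewrite /G6 [LHS]mxE; congr (_ + _); first by rewrite mxE.
rewrite mxE; congr (_ * _); rewrite mxE; apply eq_bigr => k _.
by rewrite [Amx _ _ _ k b]mxE.
Qed.

Lemma split3 (j : 'I_d) : (exists b : 'I_m, (j : nat) = b) \/
  (exists c : 'I_l, (j : nat) = (m + c)%N) \/ (exists b : 'I_m, (j : nat) = (m + l + b)%N).
Proof.
case: j => j Hj /=.
case: (ltnP j m) => H1.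
  by left; exists (Ordinal H1).
case: (ltnP j (m + l)) => H2.
  have H : (j - m < l)%N by lia.
  by right; left; exists (Ordinal H) => /=; lia.
have H : (j - (m + l) < m)%N by move: Hj; rewrite /dd /mm /ll in H2 *; lia.
by right; right; exists (Ordinal H) => /=; lia.
Qed.

Lemma topE (a : 'I_m) (j : 'I_d) : I (x a j + h * \sum_k M2 a k * x (m + k) j).
Proof.
apply Igen; left.
case: (split3 j) => [[b ->]|[[c ->]|[b ->]]].
- by left; exists a, b; rewrite G1E.
- by right; right; right; right; left; exists a, c; rewrite G5E.
- by right; left; exists a, b; rewrite G2E.
Qed.

Lemma botE (a : 'I_m) (j : 'I_d) : I (x (m + l + a) j + h * \sum_k M1 a k * x (m + k) j).
Proof.
apply Igen; left.
case: (split3 j) => [[b ->]|[[c ->]|[b ->]]].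
- by right; right; left; exists a, b; rewrite G3E.
- by right; right; right; right; right; exists a, c; rewrite G6E.
- by right; right; right; left; exists a, b; rewrite G4E.
Qed.

Lemma eqv_of_gen (f : S) (M y : 'I_l -> S) :
  I (f + h * \sum_k M k * y k) -> eqv P f (\sum_k - (h * M k) * y k).
Proof.
move=> H; rewrite /eqv.
have -> : \sum_k - (h * M k) * y k = - (h * \sum_k M k * y k).
  rewrite mulr_sumr -sumrN; apply eq_bigr => k _; by rewrite mulNr mulrA.
by rewrite opprK.
Qed.

Lemma AE (k f : 'I_l) : I (Amx R n r k f - \sum_(b : 'I_m) x (m + k) (m + l + b) * M1 b f).
Proof.
set G7 := (B2 R n r *m Jmx S m *m (B1 R n r)^T - Amx R n r *m Jmx S l).
have HG : forall c e, I (G7 c e).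
  move=> c e; apply Igen; right; right; right; by exists c, e.
have -> : \sum_(b : 'I_m) x (m + k) (m + l + b) * M1 b f = (B2 R n r *m M1) k f.
  rewrite mxE; apply eq_bigr => b _; by rewrite [B2 _ _ _ k b]mxE.
have -> : Amx R n r k f - (B2 R n r *m M1) k f = - (G7 *m Jmx S l) k f.
  rewrite /G7 mulmxBl -!mulmxA Jmx_invol mulmx1 /M1 !mulmxA !mxE.
  by rewrite opprB.
apply IN; rewrite mxE; apply Isum => e; rewrite mulrC; apply IM; apply HG.
Qed.

Definition bcol (p : 'I_m + 'I_m) : nat :=
  match p with inl b => b | inr b => (m + l + b)%N end.

Lemma rowE (i : 'I_d) : exists c : 'I_l -> S, forall j : 'I_d,
  eqv P (x i j) (\sum_k c k * x (m + k) j).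
Proof.
case: (split3 i) => [[a ->]|[[c0 ->]|[a ->]]].
- exists (fun k => - (h * M2 a k)) => j; apply eqv_of_gen, topE.
- exists (fun k => (k == c0)%:R) => j; rewrite sum_delta; apply eqv_refl.
- exists (fun k => - (h * M1 a k)) => j; apply eqv_of_gen, botE.
Qed.

Lemma colE (j : 'I_d) : exists w : 'I_m + 'I_m -> S, forall k : 'I_l,
  eqv P (x (m + k) j) (\sum_p w p * x (m + k) (bcol p)).
Proof.
case: (split3 j) => [[b ->]|[[c ->]|[b ->]]].
- exists (fun p => match p with inl b' => (b' == b)%:R | inr _ => 0 end) => k.
  rewrite big_sumType /= sum_delta big1 ?addr0; last by move=> ? _; rewrite mul0r.
  apply eqv_refl.
- exists (fun p => match p with inl _ => 0 | inr b => M1 b c end) => k.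
  rewrite big_sumType /= big1 ?add0r; last by move=> ? _; rewrite mul0r.
  rewrite /eqv; have := AE k c; rewrite [Amx _ _ _ k c]mxE.
  by under eq_bigr do rewrite mulrC.
- exists (fun p => match p with inl _ => 0 | inr b' => (b' == b)%:R end) => k.
  rewrite big_sumType /= big1 ?add0r; last by move=> ? _; rewrite mul0r.
  rewrite sum_delta.
  apply eqv_refl.
Qed.

Lemma inZk (k : 'I_l) : inZ n r (m + k).
Proof. rewrite /inZ; case: k => k Hk /=; apply/andP; lia. Qed.

Lemma bcolZc p : inZc n r (bcol p).
Proof.
rewrite /inZc /inZ /bcol; case: p => [[p Hp]|[p Hp]] /=;
  rewrite /dd /mm /ll in Hp *; apply/andP; split; try lia; apply/negP => /andP [] ; lia.
Qed.

Lemma minor_main (i t j s : 'I_d) : I (x i j * x t s - x i s * x t j).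
Proof.
have [c1 H1] := rowE i; have [c2 H2] := rowE t.
have [w1 K1] := colE j; have [w2 K2] := colE s.
apply: eqv_I.
  apply eqvB; apply eqvM; [apply H1|apply H2|apply H1|apply H2].
rewrite expand; apply Isum => k; apply Isum => k'; apply IM.
apply: eqv_I.
  apply eqvB; apply eqvM; [apply K1|apply K2|apply K2|apply K1].
have -> : forall a b c e : S, a * b - c * e = a * b - e * c by move=> a b c e; rewrite [c * _]mulrC.
rewrite expand; apply Isum => p; apply Isum => q; apply IM.
apply Igen; right; left.
exists (m + k)%N, (m + k')%N, (bcol p), (bcol q); split.
  by split; [apply inZk|apply inZk|apply bcolZc|apply bcolZc].
ring.
Qed.
End Main.

Theorem lemma4p9 (R : comUnitRingType) (pi : R) (n r : nat) :
  (2%:R : R) \is a GRing.unit -> (3 <= n)%N -> (1 <= r)%N -> (r <= n - 1)%N ->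
  forall i t j s : 'I_(dd n),
    in_ideal (@gen_big R n r pi)
      (xv R (dd n) i j * xv R (dd n) t s - xv R (dd n) i s * xv R (dd n) t j).
Proof.
move=> _ Hn Hr Hrn i t j s.
have hrn : (r <= n)%N by lia.
exact: (@minor_main R pi n r hrn i t j s).
Qed.
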